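(* Let $\delta_1,\delta_2>0$, and let $\mathcal C_{\delta_1}$ and $\mathcal C_{\delta_2}$ be finite nonempty families of cubes from the $\delta_1$-grid and the $\delta_2$-grid of $\mathbb R^n$ respectively. Let $[L,X_f]$ and $[L,Y_f]$ be random affine contractions on $\mathbb R^n$ (with the same random linear part $L$) such that $X_f$ is uniformly distributed on $\bigcup\mathcal C_{\delta_1}$ and $Y_f$ is uniformly distributed on $\bigcup\mathcal C_{\delta_2}$. Then for every $m\in M_{\delta_1}=\{k\in\mathbb Z^n:C_{\delta_1}(k)\in\mathcal C_{\delta_1}\}$, the distribution of $\mathcal M^\#[L,Y_f]$ (computed with respect to $\delta_2$) equals the conditional distribution of $\mathcal M^\#[L,X_f]$ (computed with respect to $\delta_1$) given $X_f\in C_{\delta_1}(m)$.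
   Context: Let $d$ be a metric on $\mathbb R^n$ induced by a norm $\|\cdot\|$. For $\delta>0$ and $m\in\mathbb Z^n$, $C_\delta(m)=\prod_{j=1}^n[(m_j-\tfrac12)\delta,(m_j+\tfrac12)\delta)$; the $\delta$-grid is the set of all these cubes; $\mathcal D^n(\delta)=\{\delta m:m\in\mathbb Z^n\}$. The $\delta$-roundoff of $x$ is $\tilde x=\delta m$ where $x\in C_\delta(m)$, and of a map $w$ is $\tilde w(\tilde x)=\widetilde{w(\tilde x)}$ on $\mathcal D^n(\delta)$. A random affine contraction $[L,Z]$ is a pair of independent random variables, $Z\in\mathbb R^n$ and $L$ an $n\times n$ random matrix with induced operator norm $\|L\|<1$, viewed as the map $x\mapsto L(x-Z)+Z$. For nonempty $C$ with $\tilde w(C)\subset C$, $\Lambda\subset C$ is absorbing for $\tilde w$ in $C$ if every orbit of a point of $C$ eventually stays in $\Lambda$; the minimal absorbing set is the intersection of all absorbing sets in $\mathcal D^n(\delta)$ (it exists and is finite for roundoffs of contractions). $\mathcal M^\#[L,Z]$ denotes the cardinality of the minimal absorbing set of the roundoff of $[L,Z]$; here for $[L,X_f]$ the $\delta_1$-roundoff and for $[L,Y_f]$ the $\delta_2$-roundoff is used. *)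

(* Defs.v *)
From mathcomp Require Import all_boot all_algebra.
From mathcomp Require Import finmap all_classical all_reals all_analysis.
Import GRing.Theory Num.Theory.
Set Implicit Arguments. Unset Strict Implicit. Unset Printing Implicit Defensive.
Local Open Scope classical_set_scope.
Local Open Scope ring_scope.

Section Defs.
Variable R : realType.
Variable n : nat.

Definition is_norm (nrm : 'cV[R]_n -> R) : Prop :=
  [/\ forall x, nrm x = 0 -> x = 0,
      forall (a : R) x, nrm (a *: x) = `|a| * nrm x
    & forall x y, nrm (x + y) <= nrm x + nrm y].

Definition opnorm (nrm : 'cV[R]_n -> R) (L : 'M[R]_n) : R :=
  sup [set nrm (L *m x) | x in [set x | nrm x <= 1]].

Definition cube (delta : R) (m : 'cV[int]_n) : set 'cV[R]_n :=
  [set x | forall i : 'I_n,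
     ((m i 0)%:~R - 2^-1) * delta <= x i 0 /\ x i 0 < ((m i 0)%:~R + 2^-1) * delta].

Definition grid (delta : R) : set 'cV[R]_n :=
  [set x | exists m : 'cV[int]_n, x = delta *: map_mx (fun k : int => k%:~R) m].

(* delta-roundoff: x~ = delta m where x \in C_delta(m), i.e. m_j = floor(x_j/delta + 1/2) *)
Definition roundoff (delta : R) (x : 'cV[R]_n) : 'cV[R]_n :=
  delta *: \col_i ((Num.floor (x i 0 / delta + 2^-1))%:~R).

Definition affmap (L : 'M[R]_n) (z : 'cV[R]_n) (x : 'cV[R]_n) : 'cV[R]_n :=
  L *m (x - z) + z.

Definition roundmap (delta : R) (w : 'cV[R]_n -> 'cV[R]_n) (x : 'cV[R]_n) :=
  roundoff delta (w x).

Definition absorbing (delta : R) (f : 'cV[R]_n -> 'cV[R]_n) (Lam : set 'cV[R]_n) :=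
  Lam `<=` grid delta /\
  forall x, grid delta x -> exists N : nat, forall k : nat, (N <= k)%N -> Lam (iter k f x).

Definition minabs (delta : R) (f : 'cV[R]_n -> 'cV[R]_n) : set 'cV[R]_n :=
  [set x | forall Lam, absorbing delta f Lam -> Lam x].

(* M^#[L, z]: cardinality of the minimal absorbing set of the delta-roundoff
   (fset_set gives the empty fset for an infinite set; the set is finite here) *)
Definition Mcard (delta : R) (L : 'M[R]_n) (z : 'cV[R]_n) : nat :=
  (#|` fset_set (minabs delta (roundmap delta (affmap L z))) |)%fset.

End Defs.

Section Prob.
Variables (d : measure_display) (T : measurableType d) (R : realType).

Definition gen_sigma (I : Type) (f : I -> T -> R) : set (set T) :=
  <<s [set A | exists i B, measurable B /\ A = f i @^-1` B] >>.

Definition indep (P : probability T R) (F G : set (set T)) : Prop :=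
  forall A B, F A -> G B -> P (A `&` B) = (P A * P B)%E.

Variable n : nat.

Definition random_matrix (L : T -> 'M[R]_n) :=
  forall i j, measurable_fun setT (fun w => L w i j).
Definition random_vector (X : T -> 'cV[R]_n) :=
  forall i, measurable_fun setT (fun w => X w i 0).

Definition indep_mx_vec (P : probability T R) (L : T -> 'M[R]_n) (X : T -> 'cV[R]_n) :=
  indep P (gen_sigma (fun ij : 'I_n * 'I_n => fun w => L w ij.1 ij.2))
          (gen_sigma (fun i : 'I_n => fun w => X w i 0)).

Definition random_affine_contraction (P : probability T R) (nrm : 'cV[R]_n -> R)
    (L : T -> 'M[R]_n) (Z : T -> 'cV[R]_n) :=
  [/\ random_matrix L, random_vector Z, indep_mx_vec P L Z
    & forall w, opnorm nrm (L w) < 1].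

(* X is uniformly distributed on the union of the cubes C_delta(m), m in M
   (M a duplicate-free list of indices): the law of X is normalized Lebesgue
   measure on the union, determined by its values on measurable rectangles
   prod_i B_i, where lambda^n(prod_i B_i /\ C_delta(m)) =
   prod_i lambda(B_i /\ [(m_i - 1/2) delta, (m_i + 1/2) delta[) and
   lambda^n(union) = |M| delta^n. *)
Definition uniform_on_cubes (P : probability T R) (X : T -> 'cV[R]_n)
    (delta : R) (M : seq 'cV[int]_n) :=
  forall B : 'I_n -> set R, (forall i, measurable (B i)) ->
    P [set w | forall i, B i (X w i 0)] =
    ((\sum_(m <- M) \prod_(i < n)
        fine (lebesgue_measure (B i `&`
          `[((m i 0)%:~R - 2^-1) * delta, ((m i 0)%:~R + 2^-1) * delta[%classic)))
     / ((size M)%:R * delta ^+ n))%:E.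

End Prob.

(* Main.v *)
From HB Require Import structures.
Require Import Defs.
From mathcomp Require Import all_boot all_algebra.
Import order.Order.TTheory.
From mathcomp Require Import finmap all_classical all_reals all_analysis.
From mathcomp Require Import ring lra zify.
Import GRing.Theory Num.Theory.
Set Implicit Arguments. Unset Strict Implicit. Unset Printing Implicit Defensive.
Local Open Scope classical_set_scope.
Local Open Scope ring_scope.


Lemma fset_set_inf (T : choiceType) (A : set T) : ~ finite_set A -> fset_set A = fset0%fset.
Proof. by move=> nA; rewrite /fset_set; case: pselect. Qed.

Lemma card_fset_set_inj (T U : choiceType) (f : T -> U) (A : set T) :
  injective f -> #|` fset_set (f @` A)|%fset = #|` fset_set A|%fset.
Proof.
move=> fi.
have e : finite_set (f @` A) = finite_set A.
  by apply: eq_finite_set; apply: inj_card_eq => x y _ _; apply: fi.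
have [fA|nfA] := pselect (finite_set A).
  by rewrite fset_set_image // card_imfset.
by rewrite !fset_set_inf // e.
Qed.

Section PartA.
Variable R : realType.
Variable n : nat.

Definition iR (k : 'cV[int]_n) : 'cV[R]_n := map_mx (fun x : int => x%:~R) k.
Definition gm (l : 'M[R]_n) (u : 'cV[R]_n) (k : 'cV[int]_n) : 'cV[int]_n :=
  \col_i Num.floor ((l *m (iR k - u) + u) i 0 + 2^-1).
Definition Per (l : 'M[R]_n) (u : 'cV[R]_n) : set 'cV[int]_n :=
  [set k | exists p : nat, iter p.+1 (gm l u) k = k].
Definition Gc (l : 'M[R]_n) (u : 'cV[R]_n) : nat := #|` fset_set (Per l u)|%fset.

Lemma minabsE (delta : R) (f : 'cV[R]_n -> 'cV[R]_n) :
  (forall x, grid delta x -> grid delta (f x)) ->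
  minabs delta f = [set x | grid delta x /\ exists p : nat, iter p.+1 f x = x].
Proof.
move=> fg.
have itg : forall k x, grid delta x -> grid delta (iter k f x).
  by elim=> [|k IH] x gx //=; apply: fg; apply: IH.
apply/seteqP; split => x.
- move=> mx.
  have gx : grid delta x.
    apply: (mx (grid delta)); split => // y gy; exists 0%N => k _; exact: itg.
  split => //; apply: contrapT => nper.
  have : (fun y => grid delta y /\ y <> x) x.
    apply: (mx (fun y => grid delta y /\ y <> x)); split; first by move=> y [].
    move=> y gy.
    have [[k0 hk0]|nk] := pselect (exists k0, iter k0 f y = x).
      exists k0.+1 => k hk; split; first exact: itg.
      move=> ekx; apply: nper; exists (k - k0.+1)%N.
      have e : k = ((k - k0.+1).+1 + k0)%N by rewrite addSn -addnS subnK.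
      by rewrite e iterD hk0 in ekx.
    exists 0%N => k _; split; first exact: itg.
    by move=> e; apply: nk; exists k.
  by case.
- move=> [gx [p hp]] Lam [sub ab].
  have [N hN] := ab x gx.
  have hit : forall m, iter (m * p.+1) f x = x.
    elim=> [|m IH] //; by rewrite mulSn iterD IH hp.
  rewrite -(hit N); apply: hN.
  by rewrite leq_pmulr.
Qed.

Lemma conj_minabs (delta : R) (f : 'cV[R]_n -> 'cV[R]_n) (g : 'cV[int]_n -> 'cV[int]_n)
   (phi : 'cV[int]_n -> 'cV[R]_n) :
  injective phi -> grid delta = range phi -> (forall k, f (phi k) = phi (g k)) ->
  minabs delta f = phi @` [set k | exists p : nat, iter p.+1 g k = k].
Proof.
move=> phii gr fg.
have itc : forall p k, iter p f (phi k) = phi (iter p g k).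
  by elim=> [|p IH] k //=; rewrite IH fg.
rewrite minabsE; last first.
  by move=> x; rewrite gr => -[k _ <-]; rewrite fg; exists (g k).
apply/seteqP; split => x.
- move=> [gx [p hp]]; move: gx hp; rewrite gr => -[k _ <-] hp.
  exists k => //; exists p; apply: phii; by rewrite -itc.
- move=> [k [p hp] <-]; split; first by rewrite gr; exists k.
  by exists p; rewrite itc hp.
Qed.

Lemma iR_inj : injective iR.
Proof.
move=> a b e; apply/matrixP => i j; have := congr1 (fun m : 'cV[R]_n => m i j) e.
by rewrite !mxE => /intr_inj.
Qed.

Lemma Mcard_Gc (delta : R) (l : 'M[R]_n) (z : 'cV[R]_n) : 0 < delta ->
  Mcard delta l z = Gc l (delta^-1 *: z).
Proof.
move=> dp.
have d0 : delta != 0 by rewrite lt0r_neq0.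
rewrite /Mcard (@conj_minabs delta _ (gm l (delta^-1 *: z)) (fun k => delta *: iR k)).
- by rewrite card_fset_set_inj //; move=> a b /scalerI => /(_ d0) /iR_inj.
- by move=> a b /scalerI => /(_ d0) /iR_inj.
- apply/seteqP; split => x.
    by move=> [m ->]; exists m.
  by move=> [m _ <-]; exists m.
- move=> k; rewrite /roundmap /roundoff /affmap /gm; congr (_ *: _).
  have -> : l *m (delta *: iR k - z) + z =
       delta *: (l *m (iR k - delta^-1 *: z) + delta^-1 *: z).
    by rewrite scalerDr scalemxAr scalerBr !scalerA mulfV // !scale1r.
  apply/matrixP => i j; rewrite [LHS]mxE [RHS]mxE [in LHS]mxE [in RHS]mxE.
  by rewrite mulrC mulKf.
Qed.

Lemma gm_shift (l : 'M[R]_n) (u : 'cV[R]_n) (j k : 'cV[int]_n) :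
  gm l (u + iR j) (k + j) = gm l u k + j.
Proof.
rewrite /gm.
have -> : iR (k + j) - (u + iR j) = iR k - u.
  apply/matrixP => c d; rewrite !mxE rmorphD /=; lra.
apply/matrixP => a b; rewrite !mxE.
set s := \sum_(_ < n) _.
have -> : s + (u a 0 + (j a 0)%:~R) + 2^-1 = (s + u a 0 + 2^-1) + (j a 0)%:~R by lra.
rewrite floorDrz ?intr_int // intrKfloor.
by rewrite (_ : b = 0) // ?ord1.
Qed.

Lemma Gc_shift (l : 'M[R]_n) (u : 'cV[R]_n) (j : 'cV[int]_n) :
  Gc l (u + iR j) = Gc l u.
Proof.
have itc : forall p k, iter p (gm l (u + iR j)) (k + j) = iter p (gm l u) k + j.
  by elim=> [|p IH] k //=; rewrite IH gm_shift.
rewrite /Gc; have -> : Per l (u + iR j) = (fun k => k + j) @` Per l u.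
  apply/seteqP; split => x.
  - move=> [p hp]; exists (x - j); last by rewrite subrK.
    exists p; apply: (addIr j); by rewrite -itc subrK.
  - by move=> [k [p hp] <-]; exists p; rewrite itc hp.
by rewrite card_fset_set_inj //; apply: addIr.
Qed.

Definition Hn (v : 'cV[R]_n) : 'cV[R]_n :=
  v - iR (\col_i Num.floor (v i 0 + 2^-1)).

Lemma Mcard_Hn (delta : R) (l : 'M[R]_n) (z : 'cV[R]_n) : 0 < delta ->
  Mcard delta l z = Gc l (Hn (delta^-1 *: z)).
Proof.
move=> dp; rewrite Mcard_Gc // /Hn.
by rewrite -[RHS](Gc_shift _ _ (\col_i Num.floor ((delta^-1 *: z) i 0 + 2^-1))) subrK.
Qed.

End PartA.


Definition Omega (R : realType) (n : nat) := ('M[R]_n * 'cV[R]_n)%type.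
HB.instance Definition _ (R : realType) n := Choice.on (Omega R n).
HB.instance Definition _ (R : realType) n := isPointed.Build (Omega R n) (0,0).

Section PartB.
Variable R : realType.
Variable n : nat.

Definition oitv (o : option R) (x : R) : Prop := if o is Some a then a <= x else True.
Definition Rect (a : 'I_n -> 'I_n -> option R) (b : 'I_n -> option R) : set (Omega R n) :=
  [set w : Omega R n | (forall r s, oitv (a r s) (w.1 r s)) /\ (forall r, oitv (b r) (w.2 r 0))].
Definition Gen : set (set (Omega R n)) := [set S | exists a b, S = Rect a b].
Local Notation OM := (g_sigma_algebraType Gen).

Lemma mRect a b : measurable (Rect a b : set OM).
Proof. by apply: sub_sigma_algebra; exists a, b. Qed.

Lemma mproj1 r s : measurable_fun setT (fun w : OM => w.1 r s).
Proof.
apply: (measurability _ (measurable_realfun.RGenCInfty.measurableE R)).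
move=> _ [_ [x ->] <-].
have -> : setT `&` (fun w : OM => w.1 r s) @^-1` `[x, +oo[%classic =
   Rect (fun r' s' => if (r' == r) && (s' == s) then Some x else None) (fun _ => None).
  apply/seteqP; split => w /=.
    move=> [_]; rewrite /= in_itv /= andbT => h; split => // r' s'.
    by case: ifP => // /andP[/eqP -> /eqP ->].
  move=> [h _]; split => //; have := h r s; rewrite !eqxx /= in_itv /= andbT.
  done.
exact: mRect.
Qed.

Lemma mproj2 r : measurable_fun setT (fun w : OM => w.2 r 0).
Proof.
apply: (measurability _ (measurable_realfun.RGenCInfty.measurableE R)).
move=> _ [_ [x ->] <-].
have -> : setT `&` (fun w : OM => w.2 r 0) @^-1` `[x, +oo[%classic =
   Rect (fun _ _ => None) (fun r' => if (r' == r) then Some x else None).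
  apply/seteqP; split => w /=.
    move=> [_]; rewrite /= in_itv /= andbT => h; split => // r'.
    by case: ifP => // /eqP ->.
  move=> [_ h]; split => //; have := h r; rewrite !eqxx /= in_itv /= andbT.
  done.
exact: mRect.
Qed.

Lemma mpk (k : 'cV[int]_n) r :
  measurable_fun setT (fun w : OM => (w.1 *m (iR R k - w.2) + w.2) r 0 + 2^-1).
Proof.
have -> : (fun w : OM => (w.1 *m (iR R k - w.2) + w.2) r 0 + 2^-1) =
  (fun w : OM => \sum_(s <- index_enum 'I_n) (w.1 r s * ((k s 0)%:~R - w.2 s 0))
     + w.2 r 0 + 2^-1).
  apply/funext => w; rewrite !mxE; congr (_ + _ + _).
  by apply: eq_bigr => s _; rewrite !mxE.
apply: measurable_realfun.measurable_funD; last exact: measurable_cst.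
apply: measurable_realfun.measurable_funD; last exact: mproj2.
apply: measurable_sum => s.
apply: measurable_realfun.measurable_funM; first exact: mproj1.
apply: measurable_realfun.measurable_funB; first exact: measurable_cst.
exact: mproj2.
Qed.

Lemma mpre (f : OM -> R) (B : set R) : measurable_fun setT f -> measurable B ->
  measurable (f @^-1` B).
Proof. by move=> mf mB; rewrite -[X in measurable X]setTI; apply: mf. Qed.

Lemma mEgm (k j : 'cV[int]_n) : measurable [set w : OM | gm w.1 w.2 k = j].
Proof.
have -> : [set w : OM | gm w.1 w.2 k = j] = \bigcap_(r in [set: 'I_n])
    ((fun w : OM => (w.1 *m (iR R k - w.2) + w.2) r 0 + 2^-1) @^-1`
       `[(j r 0)%:~R, (j r 0 + 1)%:~R[%classic).
  apply/seteqP; split => w /=.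
    move=> <- r _ /=; rewrite in_itv /= mxE; exact: floor_itv.
  move=> h; apply/matrixP => r c; rewrite mxE (_ : c = 0) ?ord1 //.
  apply/eqP; rewrite floor_eq; have := h r I; by rewrite /= in_itv.
apply: fin_bigcap_measurable; first exact: finite_finset.
move=> r _; apply: mpre; [exact: mpk | exact: measurable_itv].
Qed.

Lemma cbigcup_m (U : countType) (F : U -> set OM) :
  (forall i, measurable (F i)) -> measurable (\bigcup_i F i).
Proof. by move=> h; apply: countable_bigcupT_measurable => //; exact: countableP. Qed.

Lemma cbigcap_m (U : countType) (F : U -> set OM) :
  (forall i, measurable (F i)) -> measurable (\bigcap_i F i).
Proof.
move=> h; rewrite -[X in measurable X]setCK setC_bigcap; apply: measurableC.
by apply: cbigcup_m => i; apply: measurableC.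
Qed.

Lemma mEI p (k j : 'cV[int]_n) : measurable [set w : OM | iter p (gm w.1 w.2) k = j].
Proof.
elim: p j => [|p IH] j /=.
  have [->|kj] := eqVneq k j.
    by rewrite (_ : [set _ | _] = setT) //; apply/seteqP; split.
  by rewrite (_ : [set _ | _] = set0) //; apply/seteqP; split => // w /= e; rewrite e eqxx in kj.
have -> : [set w : OM | gm w.1 w.2 (iter p (gm w.1 w.2) k) = j] =
  \bigcup_(i : 'cV[int]_n) ([set w : OM | iter p (gm w.1 w.2) k = i] `&`
                            [set w : OM | gm w.1 w.2 i = j]).
  apply/seteqP; split => w /=.
    by move=> e; exists (iter p (gm w.1 w.2) k) => //.
  by move=> [i _ [/= -> ->]].
apply: cbigcup_m => i; apply: measurableI; [exact: IH | exact: mEgm].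
Qed.

Lemma mEP (k : 'cV[int]_n) : measurable [set w : OM | Per w.1 w.2 k].
Proof.
have -> : [set w : OM | Per w.1 w.2 k] =
   \bigcup_(p : nat) [set w : OM | iter p.+1 (gm w.1 w.2) k = k].
  by apply/seteqP; split => w /= [p hp]; exists p.
by apply: cbigcup_m => p; apply: mEI.
Qed.

Lemma mExact (F : {fset 'cV[int]_n}%fset) :
  measurable [set w : OM | Per w.1 w.2 = [set` F]].
Proof.
have -> : [set w : OM | Per w.1 w.2 = [set` F]] =
   \bigcap_(i : 'cV[int]_n) (if i \in F then [set w : OM | Per w.1 w.2 i]
                             else ~` [set w : OM | Per w.1 w.2 i]).
  apply/seteqP; split => w /=.
    move=> e i _; case: ifP => iF /=; rewrite e /= ?iF //.
  move=> h; apply/seteqP; split => i /=.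
    move=> pi; have := h i I; case: ifP => // _; by [].
  move=> iF; have := h i I; by rewrite iF.
apply: cbigcap_m => i; case: ifP => _; [exact: mEP | apply: measurableC; exact: mEP].
Qed.

Lemma mcond (P : Prop) (E : set OM) : measurable E -> measurable [set w | P /\ E w].
Proof.
move=> mE; have [p|np] := pselect P.
  by rewrite (_ : [set _ | _] = E) //; apply/seteqP; split => w //= [].
by rewrite (_ : [set _ | _] = set0) //; apply/seteqP; split => w //= [].
Qed.

Lemma mSA (A : set nat) : measurable [set w : OM | A (Gc w.1 w.2)].
Proof.
have -> : [set w : OM | A (Gc w.1 w.2)] =
  (\bigcup_(F : {fset 'cV[int]_n}%fset)
     [set w : OM | A #|` F|%fset /\ Per w.1 w.2 = [set` F]]) `|`
  [set w : OM | A 0%N /\ (~` (\bigcup_(F : {fset 'cV[int]_n}%fset)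
                     [set w : OM | Per w.1 w.2 = [set` F]])) w].
  apply/seteqP; split => w /=.
    rewrite /Gc; have [fin|nfin] := pselect (finite_set (Per w.1 w.2)).
      move=> hA; left; exists (fset_set (Per w.1 w.2)) => //.
      by split => //; rewrite fset_setK.
    rewrite fset_set_inf // cardfs0 => hA; right; split => //.
    move=> [F _ /= e]; apply: nfin; rewrite e; exact: finite_fset.
  move=> [[F _ [hA e]]|[hA nF]]; rewrite /Gc.
    by rewrite e set_fsetK.
  rewrite fset_set_inf ?cardfs0 //.
  by move=> /finite_fsetP [F e]; apply: nF; exists F.
apply: measurableU.
  by apply: cbigcup_m => F; apply: mcond; exact: mExact.
apply: mcond; apply: measurableC; apply: cbigcup_m => F; exact: mExact.
Qed.

End PartB.


Section PartC1.
Variable R : realType.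

Definition cval (o : option R) : R := if o is Some x then Num.max x (- 2^-1) else - 2^-1.
Definition lenv (o : option R) : R := if cval o < 2^-1 then 2^-1 - cval o else 0.
Definition hv (delta y : R) : R := delta^-1 * y - (Num.floor (delta^-1 * y + 2^-1))%:~R.

Lemma cval_ge (o : option R) : - 2^-1 <= cval o.
Proof. case: o => [x|] /=; last exact: lexx. by rewrite le_max lexx orbT. Qed.

Lemma oitv_cval (o : option R) (v : R) : - 2^-1 <= v -> oitv o v <-> cval o <= v.
Proof.
case: o => [x|] /= hv; last by split.
by rewrite ge_max hv andbT.
Qed.

Lemma floor_half (delta y : R) (k : int) : 0 < delta ->
  (Num.floor (delta^-1 * y + 2^-1) = k) <->
  (delta * ((k%:~R) - 2^-1) <= y < delta * (k%:~R + 2^-1)).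
Proof.
move=> dp; split.
  move=> <-; have /andP[h1 h2] := floor_itv (delta^-1 * y + 2^-1).
  rewrite intrD in h2.
  set f := (Num.floor _)%:~R in h1 h2 *.
  have e : y = delta * (delta^-1 * y) by rewrite mulrA mulfV ?lt0r_neq0 // mul1r.
  apply/andP; split.
    rewrite [X in _ <= X]e ler_pM2l //; lra.
  rewrite [X in X < _]e ltr_pM2l //; lra.
move=> /andP[h1 h2]; apply: floor_def; rewrite intrD.
have e : y = delta * (delta^-1 * y) by rewrite mulrA mulfV ?lt0r_neq0 // mul1r.
rewrite [X in _ <= X]e ler_pM2l // in h1.
rewrite [X in X < _]e ltr_pM2l // in h2.
apply/andP; split; lra.
Qed.

Lemma hv_cube (delta y : R) (k : int) (o : option R) : 0 < delta ->
  (Num.floor (delta^-1 * y + 2^-1) = k /\ oitv o (hv delta y)) <->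
  (delta * ((k%:~R) + cval o) <= y < delta * (k%:~R + 2^-1)).
Proof.
move=> dp.
have e : y = delta * (delta^-1 * y) by rewrite mulrA mulfV ?lt0r_neq0 // mul1r.
have cg := cval_ge o.
split.
  move=> [fk]; have := fk; move/(floor_half _ _ dp) => /andP[h1 h2].
  rewrite /hv fk oitv_cval; last first.
    rewrite [X in _ <= X]e ler_pM2l // in h1; lra.
  move=> hc; apply/andP; split => //.
  rewrite [X in _ <= X]e ler_pM2l //; lra.
move=> /andP[h1 h2].
have hk : Num.floor (delta^-1 * y + 2^-1) = k.
  apply/(floor_half _ _ dp); apply/andP; split => //.
  apply: le_trans h1; rewrite ler_pM2l //; lra.
split => //; rewrite /hv hk oitv_cval.
  rewrite [X in _ <= X]e ler_pM2l // in h1; lra.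
rewrite [X in _ <= X]e ler_pM2l // in h1; lra.
Qed.

Definition Bo (delta : R) (o : option R) : set R :=
  \bigcup_(k : int) `[delta * (k%:~R + cval o), delta * (k%:~R + 2^-1)[%classic.

Lemma BoE (delta y : R) (o : option R) : 0 < delta -> oitv o (hv delta y) <-> Bo delta o y.
Proof.
move=> dp; split.
  move=> h; exists (Num.floor (delta^-1 * y + 2^-1)) => //=.
  rewrite in_itv /=; apply/(hv_cube _ _ _ dp); split => //.
by move=> [k _]; rewrite /= in_itv /= => /(hv_cube _ _ _ dp) [].
Qed.

Lemma mBo (delta : R) (o : option R) : measurable (Bo delta o).
Proof.
apply: countable_bigcupT_measurable; first exact: countableP.
move=> k; exact: measurable_itv.
Qed.

End PartC1.


Section PartD.
Variables (R : realType) (n : nat) (d : measure_display) (T : measurableType d)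
  (P : probability T R).

Lemma gen_sigma_fin (I : finType) (f : I -> T -> R) (B : I -> set R) :
  (forall i, measurable (B i)) -> gen_sigma f [set w | forall i, B i (f i w)].
Proof.
move=> mB.
pose G := [set A : set T | exists i (B : set R), measurable B /\ A = f i @^-1` B].
have -> : [set w | forall i, B i (f i w)] = \bigcap_(i in [set: I]) (f i @^-1` B i).
  by apply/seteqP; split => w /= h i; [move=> _; exact: h | exact: h].
have : G.-sigma.-measurable
    (\bigcap_(i in [set: I]) ((f i @^-1` B i) : set (g_sigma_algebraType G))).
  apply: fin_bigcap_measurable; first exact: finite_finset.
  by move=> i _; apply: sub_sigma_algebra; exists i, (B i).
by [].
Qed.

Lemma gen_sigma_meas (I : Type) (f : I -> T -> R) :
  (forall i, measurable_fun setT (f i)) -> gen_sigma f `<=` measurable.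
Proof.
move=> mf; apply: smallest_sub; first exact: sigma_algebra_measurable.
by move=> _ [i [B [mB ->]]]; rewrite -[X in measurable X]setTI; exact: mf.
Qed.

Lemma sum_uniq1 (I : eqType) (s : seq I) (k : I) (F : I -> R) :
  uniq s -> k \in s -> \sum_(m <- s) (if m == k then F m else 0) = F k.
Proof.
elim: s => [|a s IH] //= /andP[an us] ks; rewrite big_cons.
have [ak|ak] := eqVneq a k.
  rewrite ak big1_seq ?addr0 // => m /andP[_ ms].
  by case: eqP => // e; move: an; rewrite ak -e ms.
rewrite add0r IH //; move: ks; by rewrite in_cons eq_sym (negbTE ak).
Qed.

Definition Oset (o : option R) : set R := [set x | oitv o x].
Lemma mOset o : measurable (Oset o).
Proof.
case: o => [x|] /=; last by rewrite (_ : Oset None = setT) //; apply/seteqP; split.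
rewrite (_ : Oset (Some x) = `[x, +oo[%classic); first exact: measurable_itv.
by apply/seteqP; split => y /=; rewrite in_itv /= andbT.
Qed.

Section OneVec.
Variables (delta : R) (M : seq 'cV[int]_n) (Z : T -> 'cV[R]_n).
Hypotheses (dp : 0 < delta) (uM : uniq M) (M0 : M != [::]) (rZ : random_vector Z)
  (uZ : uniform_on_cubes P Z delta M).

Definition EV (b : 'I_n -> option R) : set T :=
  [set w | forall r, oitv (b r) (hv delta (Z w r 0))].
Definition EC (k : 'cV[int]_n) : set T := [set w | cube delta k (Z w)].

Definition Zc : 'I_n -> T -> R := fun i w => Z w i 0.

Lemma ECE k w : EC k w <-> forall i, Num.floor (delta^-1 * Z w i 0 + 2^-1) = k i 0.
Proof.
split.
  move=> h i; apply/(floor_half _ _ dp); have [h1 h2] := h i.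
  by rewrite mulrC h1 /= mulrC.
move=> h i; have /(floor_half _ _ dp) /andP[h1 h2] := h i.
by split; rewrite mulrC.
Qed.

Lemma EV_sigma b : gen_sigma Zc (EV b).
Proof.
have -> : EV b = [set w | forall i, Bo delta (b i) (Zc i w)].
  by apply/seteqP; split => w /= h i; apply/BoE => //; exact: h.
by apply: (gen_sigma_fin (f := Zc) (B := fun i => Bo delta (b i))) => i; exact: mBo.
Qed.

Definition BI (b : 'I_n -> option R) (k : 'cV[int]_n) (i : 'I_n) : set R :=
  `[delta * ((k i 0)%:~R + cval (b i)), delta * ((k i 0)%:~R + 2^-1)[%classic.

Lemma EVCE b k : EV b `&` EC k = [set w | forall i, BI b k i (Zc i w)].
Proof.
apply/seteqP; split => w /=.
  move=> [hv /ECE hc] i; rewrite /BI /= in_itv /=; apply/(hv_cube _ _ _ dp).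
  by split; [exact: hc | exact: hv].
move=> h; split.
  move=> r; have := h r; rewrite /BI /= in_itv /= => /(hv_cube _ _ _ dp) [].
  by [].
apply/ECE => r; have := h r; rewrite /BI /= in_itv /= => /(hv_cube _ _ _ dp) [].
by [].
Qed.

Lemma EVC_sigma b k : gen_sigma Zc (EV b `&` EC k).
Proof. by rewrite EVCE; apply: (gen_sigma_fin (f := Zc) (B := BI b k)) => i; exact: measurable_itv. Qed.

Lemma mZc : forall i, measurable_fun setT (Zc i).
Proof. by move=> i; exact: rZ. Qed.

Lemma mEV b : measurable (EV b).
Proof. exact: (gen_sigma_meas mZc (EV_sigma b)). Qed.

Lemma mEVC b k : measurable (EV b `&` EC k).
Proof. exact: (gen_sigma_meas mZc (EVC_sigma b k)). Qed.

Lemma EV_None : EV (fun _ => None) = setT.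
Proof. by apply/seteqP; split. Qed.

Lemma mEC k : measurable (EC k).
Proof. by have := mEVC (fun _ => None) k; rewrite EV_None setTI. Qed.

Lemma lebco (a b : R) : lebesgue_measure (`[a, b[%classic : set R) =
  (if (a < b)%R then (b - a)%:E else 0)%E.
Proof. by rewrite lebesgue_measure_itv /= lte_fin; case: ifP. Qed.

Lemma PEVC b k : k \in M ->
  P (EV b `&` EC k) = ((\prod_i lenv (b i)) / (size M)%:R)%:E.
Proof.
move=> kM; rewrite EVCE uZ; last by move=> i; exact: measurable_itv.
congr EFin.
rewrite (eq_bigr (fun m => if m == k then \prod_i (delta * lenv (b i)) else 0)).
  rewrite sum_uniq1 // big_split /= prodr_const card_ord.
  have d0 : delta != 0 by rewrite lt0r_neq0.
  have s0 : (size M)%:R != 0 :> R by rewrite pnatr_eq0 size_eq0.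
  by field; rewrite s0 expf_neq0.
move=> m _; case: eqP => [->|/eqP mk].
  apply: eq_bigr => i _.
  rewrite setIidl; last first.
    move=> y; rewrite /BI /= !in_itv /= => /andP[h1 h2].
    have := cval_ge (b i) => hc.
    apply/andP; split; last by rewrite mulrC.
    apply: le_trans h1; rewrite mulrC ler_pM2l //; lra.
  rewrite /BI lebco; case: ifP => h.
    rewrite /= /lenv; case: ifP => h'; first by ring.
    by move: h; rewrite ltr_pM2l // ltrD2l h'.
  rewrite /= /lenv; case: ifP => h'; last by rewrite mulr0.
  by move: h; rewrite ltr_pM2l // ltrD2l h'.
have [i0 hi] : exists i, m i 0 != k i 0.
  apply: contrapT => hn; move/eqP: mk; apply.
  apply/matrixP => i1 j; rewrite (_ : j = 0) ?ord1 //.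
  apply: contrapT => hh; apply: hn; exists i1; exact/eqP.
rewrite (bigD1 i0) //=.
rewrite (_ : _ `&` _ = set0) ?measure0 /= ?mul0r //.
apply/seteqP; split => // y; rewrite /BI /= !in_itv /= => -[/andP[h1 h2] /andP[h3 h4]].
have hc := cval_ge (b i0).
have e1 : (m i0 0)%:~R - 2^-1 < (k i0 0)%:~R + 2^-1 :> R.
  rewrite -(ltr_pM2r dp); apply: (le_lt_trans h3); by rewrite mulrC.
have e2 : (k i0 0)%:~R - 2^-1 < (m i0 0)%:~R + 2^-1 :> R.
  have : delta * ((k i0 0)%:~R + cval (b i0)) < delta * ((m i0 0)%:~R + 2^-1).
    by apply: (le_lt_trans h1); rewrite mulrC.
  rewrite ltr_pM2l // => hh; lra.
have e1' : (m i0 0 < k i0 0 + 1)%R.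
  by rewrite -(ltr_int R) intrD; lra.
have e2' : (k i0 0 < m i0 0 + 1)%R.
  by rewrite -(ltr_int R) intrD; lra.
by move: hi e1' e2'; lia.
Qed.


Lemma lenvN : lenv (None : option R) = 1.
Proof. rewrite /lenv /=; case: ifP => h; first lra. by move: h; have -> : - 2^-1 < 2^-1 :> R by lra. Qed.

Lemma PEC k : k \in M -> P (EC k) = ((size M)%:R^-1)%:E.
Proof.
move=> kM; rewrite -[EC k]setTI -EV_None PEVC //.
by rewrite (eq_bigr (fun _ => 1)) ?prodr_const_nat ?big1 ?mul1r // => i _; rewrite lenvN.
Qed.

Lemma EC_disj k k' : k != k' -> EC k `&` EC k' = set0.
Proof.
move=> kk; apply/seteqP; split => // w [/ECE h1 /ECE h2].
move/eqP: kk; apply; apply/matrixP => i j; rewrite (_ : j = 0) ?ord1 //.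
by rewrite -h1 -h2.
Qed.

Lemma meas_list (E : set T) (s : seq 'cV[int]_n) : measurable E -> uniq s ->
  P (E `&` \bigcup_(k in [set` s]) EC k) = \sum_(k <- s) P (E `&` EC k).
Proof.
move=> mE; elim: s => [|a s IH] /=.
  rewrite big_nil (_ : \bigcup_(k in _) _ = set0) ?setI0 ?measure0 //.
  by apply/seteqP; split => // w [k].
move=> /andP[an us]; rewrite big_cons -IH //.
have -> : E `&` \bigcup_(k in [set` a :: s]) EC k =
   (E `&` EC a) `|` (E `&` \bigcup_(k in [set` s]) EC k).
  apply/seteqP; split => w /=.
    move=> [Ew [k /= ks Ek]]; move: ks; rewrite in_cons => /orP[/eqP ka|ks].
      by left; split => //; rewrite -ka.
    by right; split => //; exists k.
  move=> [[Ew Ea]|[Ew [k ks Ek]]]; split => //.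
    by exists a => //=; rewrite in_cons eqxx.
  by exists k => //=; rewrite in_cons ks orbT.
have mU : forall s' : seq 'cV[int]_n, measurable (\bigcup_(k in [set` s']) EC k).
  move=> s'; apply: fin_bigcup_measurable; first exact: finite_seq.
  by move=> k _; exact: mEC.
rewrite measureU //; [exact: measurableI (mE) (mEC a) | exact: measurableI |].
apply/seteqP; split => // w [[_ Ea] [_ [k ks Ek]]].
have ak : a != k by apply: contraNneq an => ->.
by have := EC_disj ak; move/seteqP => [+ _] => /(_ w) /=; apply.
Qed.

Lemma PU : P (\bigcup_(k in [set` M]) EC k) = 1%E.
Proof.
rewrite -[X in P X]setTI meas_list //.
rewrite (eq_big_seq (fun _ => ((size M)%:R^-1)%:E)); last by move=> k kM; rewrite setTI PEC.
rewrite sumEFin big_const_seq count_predT iter_addr_0; congr EFin.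
by rewrite -[(_^-1) *+ _]mulr_natr mulVf // pnatr_eq0 size_eq0.
Qed.

Lemma PE_split (E : set T) : measurable E -> P E = \sum_(k <- M) P (E `&` EC k).
Proof.
move=> mE; rewrite -meas_list //.
set U := \bigcup_(k in [set` M]) EC k.
have mU : measurable U.
  apply: fin_bigcup_measurable; first exact: finite_seq.
  by move=> k _; exact: mEC.
have hC : P (~` U) = 0%E by rewrite probability_setC // PU subee.
have mEC' : measurable (E `&` ~` U) by apply: measurableI => //; exact: measurableC.
have h0 : P (E `&` ~` U) = 0%E.
  apply/eqP; rewrite eq_le measure_ge0 // andbT -hC.
  by apply: le_measure; rewrite ?inE //; exact: measurableC.
transitivity (P ((E `&` U) `|` (E `&` ~` U))); first by rewrite -setIUr setUv setIT.
have mEU : measurable (E `&` U) by apply: measurableI.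
rewrite (measureU P mEU mEC').
  by rewrite -[RHS]adde0; congr (_ + _)%E; exact: h0.
by rewrite setIACA setICr setI0.
Qed.

Lemma PEV b : P (EV b) = (\prod_i lenv (b i))%:E.
Proof.
rewrite PE_split; last exact: mEV.
rewrite (eq_big_seq (fun _ => ((\prod_i lenv (b i)) / (size M)%:R)%:E)); last first.
  by move=> k kM; rewrite PEVC.
rewrite sumEFin big_const_seq count_predT iter_addr_0; congr EFin.
rewrite -[(_ / _) *+ _]mulr_natr -mulrA mulVf ?mulr1 //.
by rewrite pnatr_eq0 size_eq0.
Qed.


End OneVec.
End PartD.


Section pfm.
Context d d' (T1 : measurableType d) (T2 : measurableType d') (R : realType).
Variables (m : {measure set T1 -> \bar R}) (f : T1 -> T2).
Hypothesis mf : measurable_fun [set: T1] f.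
Definition pfm : {measure set T2 -> \bar R} :=
  measure_function_pushforward__canonical__measure_function_Measure m mf.
Lemma pfmE A : pfm A = m (f @^-1` A). Proof. by []. Qed.
End pfm.

Section PartE.
Variables (R : realType) (n : nat) (d : measure_display) (T : measurableType d)
  (P : probability T R).
Variable (L : T -> 'M[R]_n).
Hypothesis rL : random_matrix L.

Local Notation OM := (g_sigma_algebraType (@Gen R n)).

Definition Lc : 'I_n * 'I_n -> T -> R := fun ij w => L w ij.1 ij.2.
Definition EL (a : 'I_n -> 'I_n -> option R) : set T :=
  [set w | forall r s, oitv (a r s) (L w r s)].

Lemma EL_sigma a : gen_sigma Lc (EL a).
Proof.
have -> : EL a = [set w | forall ij, Oset (a ij.1 ij.2) (Lc ij w)].
  apply/seteqP; split => w /= h.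
    by case=> r s; exact: h.
  by move=> r s; exact: (h (r, s)).
by apply: (gen_sigma_fin (f := Lc) (B := fun ij => Oset (a ij.1 ij.2))) => ij; exact: mOset.
Qed.

Lemma mEL a : measurable (EL a).
Proof.
apply: (gen_sigma_meas _ (EL_sigma a)) => ij; exact: rL.
Qed.

Definition phi (delta : R) (Z : T -> 'cV[R]_n) : T -> OM :=
  fun w => (L w, Hn (delta^-1 *: Z w)).

Lemma phi_pre delta Z a b : phi delta Z @^-1` Rect a b = EL a `&` EV delta Z b.
Proof.
apply/seteqP; split => w /= [h1 h2]; split => // r; have := h2 r;
  by rewrite /Hn /iR /hv !mxE.
Qed.

Lemma mphi delta Z : 0 < delta -> random_vector Z -> measurable_fun setT (phi delta Z).
Proof.
move=> dp rZ.
apply: (@measurability _ _ _ OM setT (phi delta Z) (@Gen R n) erefl).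
move=> _ [_ [a [b ->]] <-]; rewrite setTI phi_pre.
apply: measurableI; [exact: mEL | exact: mEV].
Qed.

Lemma setIGen : setI_closed (@Gen R n).
Proof.
move=> _ _ [a [b ->]] [a' [b' ->]].
pose om (o o' : option R) := match o, o' with
  | Some x, Some y => Some (Num.max x y) | Some x, None => Some x
  | None, o'' => o'' end.
have omE : forall o o' v, oitv (om o o') v <-> oitv o v /\ oitv o' v.
  move=> [x|] [y|] v /=.
  - by rewrite ge_max; split; [move/andP | move=> [-> ->]].
  - by split => [h|[h _]].
  - by split => [h|[_ h]].
  - by split.
exists (fun r s => om (a r s) (a' r s)), (fun r => om (b r) (b' r)).
apply/seteqP; split => w /=.
  move=> [[h1 h2] [h1' h2']]; split.
    by move=> r s; apply/omE; split; [exact: h1 | exact: h1'].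
  by move=> r; apply/omE; split; [exact: h2 | exact: h2'].
move=> [h1 h2]; split; split.
- by move=> r s; have /omE [] := h1 r s.
- by move=> r; have /omE [] := h2 r.
- by move=> r s; have /omE [] := h1 r s.
- by move=> r; have /omE [] := h2 r.
Qed.

End PartE.


Section Main.
Variables (R : realType) (n : nat) (d : measure_display) (T : measurableType d)
  (P : probability T R).
Variables (delta1 delta2 : R) (M1 M2 : seq 'cV[int]_n) (L : T -> 'M[R]_n) (X Y : T -> 'cV[R]_n).
Hypotheses (d1p : 0 < delta1) (d2p : 0 < delta2) (uM1 : uniq M1) (M1n : M1 != [::])
  (uM2 : uniq M2) (M2n : M2 != [::])
  (rL : random_matrix L) (rX : random_vector X) (rY : random_vector Y)
  (iX : indep_mx_vec P L X) (iY : indep_mx_vec P L Y)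
  (uX : uniform_on_cubes P X delta1 M1) (uY : uniform_on_cubes P Y delta2 M2).
Variable m : 'cV[int]_n.
Hypothesis mM1 : m \in M1.

Local Notation OM := (g_sigma_algebraType (@Gen R n)).

Let c : R := (size M1)%:R.
Let c0 : c != 0. Proof. by rewrite /c pnatr_eq0 size_eq0. Qed.

Definition m1 : {measure set OM -> \bar R} := pfm P (mphi rL d2p rY).
Definition m2 : {measure set OM -> \bar R} :=
  mscale (((size M1)%:R : R)%:nng) (pfm (mrestr P (mEC d1p rX m)) (mphi rL d1p rX)).

Lemma PEL_fin a : P (EL L a) = (fine (P (EL L a)))%:E.
Proof. by rewrite fineK // fin_num_measure //; exact: mEL. Qed.

Lemma m1m2 A : @Gen R n A -> m1 A = m2 A.
Proof.
move=> [a [b ->]].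
change (P (phi L delta2 Y @^-1` Rect a b) =
  (((size M1)%:R : R)%:E * P (phi L delta1 X @^-1` Rect a b `&` EC delta1 X m))%E).
rewrite !phi_pre.
rewrite (iY (EL_sigma a) (EV_sigma (Z:=Y) d2p b)).
rewrite (PEV d2p uM2 M2n rY uY b).
rewrite -setIA (iX (EL_sigma a) (EVC_sigma d1p b m)).
rewrite (PEVC d1p uM1 M1n uX b mM1) PEL_fin -!EFinM; congr EFin.
by rewrite /c; field; rewrite -/c c0.
Qed.

Lemma key (S : set OM) : measurable S -> m1 S = m2 S.
Proof.
move=> mS.
have Gg : forall i : nat, @Gen R n ((fun _ => setT) i).
  move=> _; exists (fun _ _ => None), (fun _ => None).
  by apply/seteqP; split.
have cov : \bigcup_(k : nat) ((fun _ => setT : set OM) k) = setT.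
  by rewrite bigcup_const.
have fin : forall k : nat, (m1 ((fun _ => setT : set OM) k) < +oo)%E.
  move=> _; rewrite /m1 pfmE preimage_setT.
  have h : (P [set: T] < +oo)%E by rewrite probability_setT ltry.
  exact: h.
exact: (@measure_unique _ R OM (@Gen R n) (fun _ => setT) erefl (@setIGen R n) Gg cov
   m1 m2 m1m2 fin S mS).
Qed.


Lemma final (A : set nat) :
  P [set w | A (Mcard delta2 (L w) (Y w))] =
  (fine (P ([set w | A (Mcard delta1 (L w) (X w))] `&` [set w | cube delta1 m (X w)]))
   / fine (P [set w | cube delta1 m (X w)]))%:E.
Proof.
have := key (mSA A).
have e2 : phi L delta2 Y @^-1` [set w : OM | A (Gc w.1 w.2)] =
          [set w | A (Mcard delta2 (L w) (Y w))].
  by apply/seteqP; split => w /=; rewrite Mcard_Hn.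
have e1 : phi L delta1 X @^-1` [set w : OM | A (Gc w.1 w.2)] =
          [set w | A (Mcard delta1 (L w) (X w))].
  by apply/seteqP; split => w /=; rewrite Mcard_Hn.
have mE1 : measurable [set w | A (Mcard delta1 (L w) (X w))].
  rewrite -e1 -[X in measurable X]setTI; apply: (mphi rL d1p rX) => //; exact: mSA.
have mE : measurable ([set w | A (Mcard delta1 (L w) (X w))] `&` [set w | cube delta1 m (X w)]).
  apply: measurableI => //; exact: (mEC d1p rX m).
move=> hk.
have hk' : P [set w | A (Mcard delta2 (L w) (Y w))] =
  (((size M1)%:R : R)%:E * P ([set w | A (Mcard delta1 (L w) (X w))]
     `&` [set w | cube delta1 m (X w)]))%E.
  rewrite -e1 -e2; exact: hk.
rewrite hk'.
have hC : P [set w | cube delta1 m (X w)] = ((size M1)%:R^-1)%:E.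
  exact: (PEC d1p uM1 M1n uX mM1).
rewrite hC /=.
set E := (_ `&` _) in mE *.
have hf : (fine (P E))%:E = P E by rewrite fineK // fin_num_measure.
rewrite -[X in (_ * X)%E]hf -EFinM; congr EFin.
by rewrite invrK mulrC.
Qed.

End Main.

Theorem theorem9 (R : realType) (n : nat) (nrm : 'cV[R]_n -> R)
  (d : measure_display) (T : measurableType d) (P : probability T R)
  (delta1 delta2 : R) (M1 M2 : seq 'cV[int]_n)
  (L : T -> 'M[R]_n) (X Y : T -> 'cV[R]_n) :
  is_norm nrm ->
  0 < delta1 -> 0 < delta2 ->
  uniq M1 -> M1 != [::] -> uniq M2 -> M2 != [::] ->
  random_affine_contraction P nrm L X ->
  random_affine_contraction P nrm L Y ->
  uniform_on_cubes P X delta1 M1 ->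
  uniform_on_cubes P Y delta2 M2 ->
  forall m, m \in M1 ->
  forall A : set nat,
    P [set w | A (Mcard delta2 (L w) (Y w))] =
    (fine (P ([set w | A (Mcard delta1 (L w) (X w))] `&` [set w | cube delta1 m (X w)]))
     / fine (P [set w | cube delta1 m (X w)]))%:E.
Proof.
move=> _ d1p d2p uM1 M1n uM2 M2n [rL rX iX _] [_ rY iY _] uX uY m mM1 A.
exact: (final d1p d2p uM1 M1n uM2 M2n rL rX rY iX iY uX uY mM1 A).
Qed.
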